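(* Let $\mathcal G=(\mathcal V,\mathcal E,W)$ be a network, $h\in\mathbb{R}^{\mathcal V}$, and consider the SNC game with binary actions on $\mathcal G$ with external field $h$, with set of Nash equilibria $\mathcal N$. Let $\mathcal V=\mathcal R\cup\mathcal S$, $\mathcal R\cap\mathcal S=\emptyset$, be a binary partition such that $\mathcal G_{\mathcal R}$ and $\mathcal G_{\mathcal S}$ are both structurally balanced, and let $\tau\in\{\pm1\}^{\mathcal R}$ be such that $\mathcal G_{\mathcal R}^{[\tau]}$ is unsigned. Let $h^-,h^+\in\mathbb{R}^{\mathcal R}$ be given by $h_i^+=\tau_ih_i+w_i^{\mathcal S}$ and $h_i^-=\tau_ih_i-w_i^{\mathcal S}$ for $i\in\mathcal R$. If $\mathcal G_{\mathcal R}$ is $(h^-,h^+)$-indecomposable and $w_i^{\mathcal R}-|h_i|>w_i^{\mathcal S}$ for all $i\in\mathcal R$, then the set $\{x^*\in\mathcal N:\ x^*_{\mathcal R}\in\{\tau,-\tau\}\}$ is globally BR-reachable.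
   Context: A network is a triple $\mathcal G=(\mathcal V,\mathcal E,W)$ where $\mathcal V$ is a finite nonempty set, $\mathcal E\subseteq\mathcal V\times\mathcal V$, and $W\in\mathbb{R}^{\mathcal V\times\mathcal V}$ has zero diagonal and satisfies $W_{ij}\neq0$ iff $(i,j)\in\mathcal E$ (weights may have either sign). It is unsigned if $W\ge0$ entrywise. For $\mathcal U\subseteq\mathcal V$, the subnetwork $\mathcal G_{\mathcal U}$ has node set $\mathcal U$, links $\mathcal E\cap(\mathcal U\times\mathcal U)$ and weight matrix $W_{\mathcal U\mathcal U}$. A network is structurally balanced if its node set can be written as a disjoint union of two sets with nonnegative weights on links within each set and nonpositive weights on links between the two sets. For $\tau\in\{\pm1\}^{\mathcal R}$, $\mathcal G_{\mathcal R}^{[\tau]}$ is the network with the same nodes and links as $\mathcal G_{\mathcal R}$ and weight matrix $[\tau]W_{\mathcal R\mathcal R}[\tau]$, where $[\tau]$ is the diagonal matrix with diagonal $\tau$. For $i\in\mathcal V$ and $\mathcal B\subseteq\mathcal V$, $w_i^{\mathcal B}=\sum_{j\in\mathcal B}|W_{ij}|$. Indecomposability: a network with node set $\mathcal U$ and $h^-\le h^+$ in $\mathbb{R}^{\mathcal U}$ is $(h^-,h^+)$-indecomposable if for every partition $\mathcal U=\mathcal U^-\cup\mathcal U^+$ into two disjoint nonempty sets there is a node $i$ with either $i\in\mathcal U^+$ and $w_i^{\mathcal U^+}+h_i^+<w_i^{\mathcal U^-}$, or $i\in\mathcal U^-$ and $w_i^{\mathcal U^-}-h_i^-<w_i^{\mathcal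 U^+}$. The SNC game with binary actions on $\mathcal G$ with external field $h\in\mathbb{R}^{\mathcal V}$ has player set $\mathcal V$, action set $\{-1,+1\}$ for each player, strategy profiles $\mathcal X=\{\pm1\}^{\mathcal V}$, and utilities $u_i(x)=h_ix_i+x_i\sum_{j\in\mathcal V}W_{ij}x_j$. Best responses $\mathcal B_i(x_{-i})=\arg\max_{x_i\in\{\pm1\}}u_i(x_i,x_{-i})$; Nash equilibrium: $x^*_i\in\mathcal B_i(x^*_{-i})$ for all $i$. A BR-path of length $l\ge0$ from $x$ to $y$ is a sequence $x^{(0)}=x,\dots,x^{(l)}=y$ such that for each $k$ some player $i_k$ has $x^{(k)}_{-i_k}=x^{(k-1)}_{-i_k}$ and $x^{(k)}_{i_k}\in\mathcal B_{i_k}(x^{(k-1)}_{-i_k})\setminus\{x^{(k-1)}_{i_k}\}$. A set $\mathcal X^*\subseteq\mathcal X$ is globally BR-reachable if from every profile there is a BR-path to some element of $\mathcal X^*$. *)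

(* Defs.v *)
From HB Require Import structures.
From mathcomp Require Import all_boot all_order all_algebra.
Set Implicit Arguments. Unset Strict Implicit. Unset Printing Implicit Defensive.
Import Order.TTheory GRing.Theory Num.Theory.
Local Open Scope ring_scope.

Section SNC.
Variables (F : realFieldType) (V : finType).

(* A network is given by its weight matrix W : V -> V -> F with zero diagonal;
   the link set is {(i,j) | W i j != 0}. *)
Definition zero_diag (W : V -> V -> F) : Prop := forall i, W i i = 0.

Definition sgn (b : bool) : F := if b then 1 else -1.

Definition wsum (W : V -> V -> F) (i : V) (B : {set V}) : F :=
  \sum_(j in B) `|W i j|.

Definition struct_balanced (W : V -> V -> F) (U : {set V}) : Prop :=
  exists A B : {set V},
    [/\ A :&: B = set0, A :|: B = U,
        (forall i j, ((i \in A) && (j \in A)) || ((i \in B) && (j \in B)) -> 0 <= W i j)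
      & (forall i j, ((i \in A) && (j \in B)) || ((i \in B) && (j \in A)) -> W i j <= 0)].

Definition gauge_unsigned (W : V -> V -> F) (U : {set V}) (tau : V -> bool) : Prop :=
  forall i j, i \in U -> j \in U -> 0 <= sgn (tau i) * W i j * sgn (tau j).

Definition indecomposable (W : V -> V -> F) (U : {set V}) (hm hp : V -> F) : Prop :=
  forall Um Up : {set V},
    Um :&: Up = set0 -> Um :|: Up = U -> Um != set0 -> Up != set0 ->
    exists i, (i \in Up /\ wsum W i Up + hp i < wsum W i Um)
           \/ (i \in Um /\ wsum W i Um - hm i < wsum W i Up).

Definition profile := V -> bool.

Definition upd (x : profile) (i : V) (b : bool) : profile :=
  fun j => if j == i then b else x j.

Definition utility (W : V -> V -> F) (h : V -> F) (i : V) (x : profile) : F :=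
  h i * sgn (x i) + sgn (x i) * \sum_j W i j * sgn (x j).

Definition best_response (W : V -> V -> F) (h : V -> F) (i : V) (x : profile) (b : bool) : Prop :=
  forall c : bool, utility W h i (upd x i c) <= utility W h i (upd x i b).

Definition nash (W : V -> V -> F) (h : V -> F) (x : profile) : Prop :=
  forall i, best_response W h i x (x i).

Definition br_step (W : V -> V -> F) (h : V -> F) (x y : profile) : Prop :=
  exists i, [/\ forall j, j != i -> y j = x j,
                y i != x i & best_response W h i x (y i)].

Inductive br_path (W : V -> V -> F) (h : V -> F) : profile -> profile -> Prop :=
| br_path_nil x : br_path W h x x
| br_path_cons x y z : br_step W h x y -> br_path W h y z -> br_path W h x z.

Definition globally_br_reachable (W : V -> V -> F) (h : V -> F) (P : profile -> Prop) : Prop :=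
  forall x, exists y, P y /\ br_path W h x y.

End SNC.

(* Main.v *)
Require Import Defs.
From mathcomp Require Import all_boot all_order all_algebra.
From mathcomp Require Import lra.
Set Implicit Arguments. Unset Strict Implicit. Unset Printing Implicit Defensive.
Import Order.TTheory GRing.Theory Num.Theory.
Local Open Scope ring_scope.

Section Pf.
Variables (F : realFieldType) (V : finType) (W : V -> V -> F) (h : V -> F).
Hypothesis W0 : zero_diag W.

Local Notation sg := (sgn F).

Lemma sgn_not b : sg (~~ b) = - sg b.
Proof. by case: b; rewrite /sgn ?opprK. Qed.
Lemma norm_sgn b : `|sg b| = 1.
Proof. by case: b; rewrite /sgn ?normrN normr1. Qed.

Definition fld (x : profile V) i := h i + \sum_j W i j * sg (x j).

Lemma sum_upd x i c : \sum_j W i j * sg (upd x i c j) = \sum_j W i j * sg (x j).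
Proof.
rewrite (bigD1 i) //= [RHS](bigD1 i) //= W0 !mul0r !add0r.
by apply: eq_bigr => j /negPf ji; rewrite /upd ji.
Qed.

Lemma brP i x b : best_response W h i x b <-> 0 <= sg b * fld x i.
Proof.
rewrite /best_response /utility.
have E c : h i * sg (upd x i c i) + sg (upd x i c i) * \sum_j W i j * sg (upd x i c j) = sg c * fld x i.
  by rewrite sum_upd /upd eqxx /fld mulrDr mulrC.
set a := sg b * fld x i.
split.
- move=> H. have := H (~~ b). rewrite !E sgn_not mulNr -/a => H'. lra.
- move=> H c; rewrite !E -/a.
  have [->|nc] := eqVneq c b; first done.
  have -> : c = ~~ b by move: nc {a H}; case: c; case: b.
  rewrite sgn_not mulNr -/a; lra.
Qed.

Lemma br_trans x y z : br_path W h x y -> br_path W h y z -> br_path W h x z.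
Proof.
elim=> [//|a b c st _ IH] H; exact: br_path_cons st (IH H).
Qed.

Lemma flip_path x i b : 0 <= sg b * fld x i -> b != x i -> br_path W h x (upd x i b).
Proof.
move=> H nb; apply: br_path_cons (br_path_nil _ _ _); exists i; split.
- by move=> j /negPf ji; rewrite /upd ji.
- by rewrite /upd eqxx.
- by apply/brP; rewrite /upd eqxx.
Qed.

Variables (R S : {set V}) (tau : V -> bool).
Hypotheses (RS0 : R :&: S = set0) (RSU : R :|: S = [set: V]).
Hypothesis gau : gauge_unsigned W R tau.

Lemma notR_S j : (j \notin R) = (j \in S).
Proof.
case: (boolP (j \in R)) => jR /=.
  apply/esym/negP => jS; have : j \in R :&: S by rewrite inE jR jS.
  by rewrite RS0 inE.
have : j \in R :|: S by rewrite RSU inE.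
by rewrite inE (negPf jR).
Qed.

Definition Up (x : profile V) := [set j in R | x j == tau j].
Definition Um (x : profile V) := [set j in R | x j != tau j].

Lemma wsum_sub i (A B : {set V}) : A \subset B -> wsum W i A <= wsum W i B.
Proof.
move=> sAB; rewrite /wsum [X in _ <= X](big_setID A) /= (setIidPr sAB) lerDl.
by apply: sumr_ge0 => j _.
Qed.

Lemma wsum_ge0 i A : 0 <= wsum W i A.
Proof. by apply: sumr_ge0 => j _. Qed.

Lemma term_eq i j b : i \in R -> j \in R ->
  sg (tau i) * (W i j * sg b) = if b == tau j then `|W i j| else - `|W i j|.
Proof.
move=> iR jR; have g := gau iR jR.
have nm : `|sg (tau i) * W i j * sg (tau j)| = `|W i j|.
  by rewrite !normrM !norm_sgn mul1r mulr1.
case: eqP => [->|/eqP neq]; first by rewrite mulrA -nm ger0_norm.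
have -> : b = ~~ tau j by move: neq; case: b; case: (tau j).
by rewrite sgn_not !mulrN mulrA -nm ger0_norm.
Qed.

Lemma R_decomp x i : i \in R ->
  sg (tau i) * fld x i = sg (tau i) * h i + (wsum W i (Up x) - wsum W i (Um x))
     + \sum_(j in S) sg (tau i) * W i j * sg (x j).
Proof.
move=> iR; rewrite /fld mulrDr -addrA; congr (_ + _).
rewrite mulr_sumr (bigID (fun j => j \in R)) /=; congr (_ + _); last first.
  by apply: eq_big => [j|j _]; rewrite ?notR_S ?mulrA.
rewrite (bigID (fun j => x j == tau j)) /= /wsum -sumrN; congr (_ + _).
  apply: eq_big => [j|j /andP[jR e]]; first by rewrite inE.
  by rewrite term_eq // e.
apply: eq_big => [j|j /andP[jR e]]; first by rewrite inE.
by rewrite term_eq // (negPf e).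
Qed.

Lemma S_bound x i : `|\sum_(j in S) sg (tau i) * W i j * sg (x j)| <= wsum W i S.
Proof.
apply: le_trans (ler_norm_sum _ _ _) _; rewrite le_eqVlt; apply/orP; left.
apply/eqP; apply: eq_bigr => j _; by rewrite !normrM !norm_sgn mul1r mulr1.
Qed.

Lemma R_bounds x i : i \in R ->
  sg (tau i) * h i + (wsum W i (Up x) - wsum W i (Um x)) - wsum W i S <= sg (tau i) * fld x i
  /\ sg (tau i) * fld x i <= sg (tau i) * h i + (wsum W i (Up x) - wsum W i (Um x)) + wsum W i S.
Proof.
move=> iR; rewrite (R_decomp x iR); have := S_bound x i; rewrite ler_norml => /andP[l u].
set s := \sum_(j in S) _ in l u *; split; lra.
Qed.

Definition hm i := sg (tau i) * h i - wsum W i S.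
Definition hp i := sg (tau i) * h i + wsum W i S.
Hypothesis indec : indecomposable W R hm hp.

Definition Rcons (x : profile V) :=
  (forall i, i \in R -> x i = tau i) \/ (forall i, i \in R -> x i = ~~ tau i).

Definition NoRU x := forall j, j \in Um x -> wsum W j (Up x) <= wsum W j (Um x) - hm j.

Lemma UmUp0 x : Um x :&: Up x = set0.
Proof.
apply/setP => j; rewrite !inE; case: (j \in R) => //=; by case: (x j == tau j).
Qed.
Lemma UmUpU x : Um x :|: Up x = R.
Proof.
apply/setP => j; rewrite !inE; case: (j \in R) => //=; by case: (x j == tau j).
Qed.

Lemma phaseB n x : (#|Up x| < n)%N -> NoRU x -> exists y, br_path W h x y /\ Rcons y.
Proof.
elim: n x => [//|n IH] x hn nru.
have [U0|Un] := eqVneq (Up x) set0.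
  exists x; split; first exact: br_path_nil; right => i iR.
  have : i \notin Up x by rewrite U0 inE.
  by rewrite inE iR /=; case: (x i); case: (tau i).
have [M0|Mn] := eqVneq (Um x) set0.
  exists x; split; first exact: br_path_nil; left => i iR.
  have : i \notin Um x by rewrite M0 inE.
  by rewrite inE iR /= negbK => /eqP.
have [i [[iU H]|[iM H]]] := indec (UmUp0 x) (UmUpU x) Mn Un; last first.
  by have := nru i iM; rewrite /hm in H *; lra.
have iR : i \in R by move: iU; rewrite inE => /andP[].
have xi : x i = tau i by move: iU; rewrite inE => /andP[_ /eqP].
set x' := upd x i (~~ tau i).
have [_ bu] := R_bounds x iR.
have st : br_path W h x x'.
  apply: flip_path; last by rewrite xi; case: (tau i).
  rewrite sgn_not mulNr oppr_ge0; rewrite /hp in H; lra.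
have sU : Up x' \subset Up x.
  apply/subsetP => j; rewrite !inE /x' /upd. have [->|ne] := eqVneq j i; last by [].

  rewrite ?eqxx.
  by case: (tau i); rewrite andbF.
have sM : Um x \subset Um x'.
  apply/subsetP => j; rewrite !inE /x' /upd; have [->|ne] := eqVneq j i; last by [].

  rewrite ?eqxx.
  by rewrite iR; case: (tau i).
have pU : Up x' \proper Up x.
  apply/properP; split=> //; exists i => //; rewrite inE /x' /upd eqxx.
  by case: (tau i); rewrite andbF.
have nru' : NoRU x'.
  move=> j jM.
  have [-> {jM}|ji] := eqVneq j i.
    have l1 := wsum_sub i sU; have l2 := wsum_sub i sM.
    have := wsum_ge0 i S; rewrite /hp /hm in H *; lra.
  have l1 := wsum_sub j sU; have l2 := wsum_sub j sM.
  have jM0 : j \in Um x.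
    by move: jM; rewrite !inE /x' /upd (negPf ji).
  have := nru j jM0; lra.
have [y [py cy]] := IH x' (leq_trans (proper_card pU) hn) nru'.
by exists y; split=> //; apply: br_trans st py.
Qed.

Lemma phaseA n x : (#|Um x| < n)%N -> exists y, br_path W h x y /\ Rcons y.
Proof.
elim: n x => [//|n IH] x hn.
case: (boolP [exists i, (i \in Um x) && (wsum W i (Um x) - hm i < wsum W i (Up x))]).
  case/existsP => i /andP[iM H].
  have iR : i \in R by move: iM; rewrite inE => /andP[].
  have xi : x i != tau i by move: iM; rewrite inE => /andP[].
  set x' := upd x i (tau i).
  have [bl _] := R_bounds x iR.
  have st : br_path W h x x'.
    apply: flip_path; last by rewrite eq_sym.
    rewrite /hm in H; lra.
  have pM : Um x' \proper Um x.
    apply/properP; split.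
      apply/subsetP => j; rewrite !inE /x' /upd; have [->|ne] := eqVneq j i; last by [].
      by rewrite ?eqxx andbF.
    by exists i => //; rewrite inE /x' /upd !eqxx andbF.
  have [y [py cy]] := IH x' (leq_trans (proper_card pM) hn).
  by exists y; split=> //; apply: br_trans st py.
move/existsPn => H.
apply: (@phaseB #|Up x|.+1) => // j jM.
by have := H j; rewrite jM /= -leNgt.
Qed.

Hypothesis strict : forall i, i \in R -> wsum W i R - `|h i| > wsum W i S.

Lemma Rcons_br x i : Rcons x -> i \in R -> best_response W h i x (x i).
Proof.
move=> C iR; apply/brP; have [bl bu] := R_bounds x iR.
have st := strict iR.
have hh : `|sg (tau i) * h i| <= `|h i| by rewrite normrM norm_sgn mul1r.
move: hh; rewrite ler_norml => /andP[h1 h2].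
case: C => C.
  have eU : Up x = R by apply/setP => j; rewrite inE; case jR: (j \in R); rewrite //= C ?eqxx.
  have eM : Um x = set0 by apply/setP => j; rewrite !inE; case jR: (j \in R); rewrite //= C ?eqxx.
  rewrite C // eU eM /wsum big_set0 in bl *; rewrite /wsum in st; lra.
have eU : Up x = set0.
  by apply/setP => j; rewrite !inE; case jR: (j \in R); rewrite //= C //; case: (tau j).
have eM : Um x = R.
  by apply/setP => j; rewrite !inE; case jR: (j \in R); rewrite //= C //; case: (tau j).
rewrite C // sgn_not mulNr oppr_ge0.
rewrite eU eM /wsum big_set0 in bu *; rewrite /wsum in st; lra.
Qed.

Lemma Rcons_upd x i b : Rcons x -> i \in S -> Rcons (upd x i b).
Proof.
move=> C iS.
have ne j : j \in R -> (j == i) = false.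
  move=> jR; apply/negP => /eqP eji; move: jR; rewrite eji.
  by rewrite -[i \in R]negbK notR_S iS.
by case: C => C; [left|right] => j jR; rewrite /upd ne // C.
Qed.

Variable sigma : V -> bool.
Hypothesis gauS : forall i j, i \in S -> j \in S -> 0 <= sg (sigma i) * W i j * sg (sigma j).

Definition G x i := sg (sigma i) * fld x i.

Lemma monoS x x' i : i \in S -> (forall j, j \notin S -> x' j = x j) ->
  (forall j, j \in S -> x j == sigma j -> x' j == sigma j) -> G x i <= G x' i.
Proof.
move=> iS E up; rewrite /G /fld !mulrDr lerD2l !mulr_sumr; apply: ler_sum => j _.
case: (boolP (j \in S)) => jS; last by rewrite (E j jS).
have g := gauS iS jS; have u := up j jS.
rewrite !mulrA; move: g u; set c := sg (sigma i) * W i j.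
rewrite /sgn; case: (sigma j); case: (x j); case: (x' j) => /=;
  rewrite ?mulr1 ?mulrN1 => g u //; try (by have := u isT); lra.
Qed.

Definition Inv x := forall j, j \in S -> x j == sigma j -> 0 <= G x j.

Lemma phase1 n x : (#|[set j in S | x j == sigma j]| < n)%N -> Rcons x ->
  exists y, br_path W h x y /\ Rcons y /\ Inv y.
Proof.
elim: n x => [//|n IH] x hn C.
case: (boolP [exists i, [&& i \in S, x i == sigma i & G x i < 0]]).
  case/existsP => i /and3P[iS xi H].
  set x' := upd x i (~~ sigma i).
  have st : br_path W h x x'.
    apply: flip_path; last by rewrite (eqP xi); case: (sigma i).
    rewrite sgn_not mulNr oppr_ge0; rewrite /G in H; lra.
  have pM : [set j in S | x' j == sigma j] \proper [set j in S | x j == sigma j].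
    apply/properP; split.
      apply/subsetP => j; rewrite !inE /x' /upd; have [->|ne] := eqVneq j i; last by [].
      by case: (sigma i); rewrite andbF.
    by exists i; rewrite inE ?iS ?xi // /x' /upd eqxx; case: (sigma i); rewrite andbF.
  have [y [py cy]] := IH x' (leq_trans (proper_card pM) hn) (Rcons_upd _ C iS).
  by exists y; split=> //; apply: br_trans st py.
move/existsPn => H; exists x; split; first exact: br_path_nil; split=> // j jS xj.
by have := H j; rewrite jS xj /= -leNgt.
Qed.

Lemma phase2 n x : (#|[set j in S | x j != sigma j]| < n)%N -> Rcons x -> Inv x ->
  exists y, br_path W h x y /\ Rcons y /\ nash W h y.
Proof.
elim: n x => [//|n IH] x hn C I.
case: (boolP [exists i, [&& i \in S, x i != sigma i & 0 <= G x i]]).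
  case/existsP => i /and3P[iS xi H].
  set x' := upd x i (sigma i).
  have st : br_path W h x x' by apply: flip_path; rewrite // eq_sym.
  have E : forall j, j \notin S -> x' j = x j.
    by move=> j jS; rewrite /x' /upd; have [ji|] := eqVneq j i; first by rewrite ji iS in jS.
  have U : forall j, j \in S -> x j == sigma j -> x' j == sigma j.
    by move=> j _; rewrite /x' /upd; have [->|] := eqVneq j i.
  have I' : Inv x'.
    move=> j jS xj; have := monoS jS E U.
    have [eji|ne] := eqVneq j i; first by rewrite eji in jS *; lra.
    have xj0 : x j == sigma j by move: xj; rewrite /x' /upd (negPf ne).
    have := I j jS xj0; lra.
  have pM : [set j in S | x' j != sigma j] \proper [set j in S | x j != sigma j].
    apply/properP; split.
      apply/subsetP => j; rewrite !inE /x' /upd; have [->|ne] := eqVneq j i; last by [].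
      by rewrite eqxx andbF.
    by exists i; rewrite inE ?iS ?xi // /x' /upd !eqxx andbF.
  have [y [py cy]] := IH x' (leq_trans (proper_card pM) hn) (Rcons_upd _ C iS) I'.
  by exists y; split=> //; apply: br_trans st py.
move/existsPn => H; exists x; split; first exact: br_path_nil; split=> // j.
case: (boolP (j \in R)) => jR; first exact: Rcons_br.
have jS : j \in S by rewrite -notR_S.
apply/brP; case: (boolP (x j == sigma j)) => xj.
  by rewrite (eqP xj); apply: I.
have := H j; rewrite jS xj /= -ltNge => Hl.
have -> : x j = ~~ sigma j by move: xj; case: (x j); case: (sigma j).
rewrite sgn_not mulNr oppr_ge0; rewrite /G in Hl; lra.
Qed.

End Pf.

Theorem corollary3 (F : realFieldType) (V : finType)
  (W : V -> V -> F) (h : V -> F) (R S : {set V}) (tau : V -> bool) :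
  zero_diag W ->
  R :&: S = set0 -> R :|: S = [set: V] -> R != set0 -> S != set0 ->
  struct_balanced W R -> struct_balanced W S ->
  gauge_unsigned W R tau ->
  indecomposable W R
    (fun i => sgn F (tau i) * h i - wsum W i S)
    (fun i => sgn F (tau i) * h i + wsum W i S) ->
  (forall i, i \in R -> wsum W i R - `|h i| > wsum W i S) ->
  globally_br_reachable W h
    (fun x => nash W h x /\
       ((forall i, i \in R -> x i = tau i) \/ (forall i, i \in R -> x i = ~~ tau i))).
Proof.
move=> W0 RS0 RSU _ _ _ [A [B [AB0 ABU pos neg]]] gau ind str x.
have gauS : forall i j, i \in S -> j \in S ->
    0 <= sgn F (i \in A) * W i j * sgn F (j \in A).
  have inB j : j \in S -> (j \in A) = false -> j \in B.
    by move=> jS jA; move: jS; rewrite -ABU inE jA.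
  move=> i j iS jS; rewrite /sgn.
  case iA: (i \in A); case jA: (j \in A).
  - by rewrite mul1r mulr1; apply: pos; rewrite iA jA.
  - have jB := inB j jS jA.
    have := neg i j; rewrite iA jB /= => /(_ isT) H.
    by rewrite mul1r mulrN1 oppr_ge0.
  - have iB := inB i iS iA.
    have := neg i j; rewrite jA iB /= orbT => /(_ isT) H.
    by rewrite mulN1r mulr1 oppr_ge0.
  - have iB := inB i iS iA; have jB := inB j jS jA.
    by rewrite mulN1r mulrN1 opprK; apply: pos; rewrite iB jB orbT.
have [y [py cy]] := phaseA W0 RS0 RSU gau ind (ltnSn #|Um R tau x|).
have [z [pz [cz iz]]] := phase1 h W0 RS0 RSU (sigma := fun j => j \in A) (ltnSn _) cy.
have [w [pw [cw nw]]] := phase2 W0 RS0 RSU gau str gauS (ltnSn _) cz iz.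
exists w; split; first by split.
exact: br_trans py (br_trans pz pw).
Qed.
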